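(* Let lines in the real projective plane be in bounded general position, with associated graph $G$. Let $V$ be a convex $m$-polygon whose vertices are vertices of $G$ and whose sides lie on distinct lines of the arrangement, suppose $V$ is not an alcove and has vertex number $k>0$, and suppose an edge $e$ of $G$ forms one side of $V$. Then $e$ forms one side of a convex polygon $W$ with at most $m+1$ sides, whose vertices are vertices of $G$ and whose sides lie on distinct lines of the arrangement, having vertex number $r$ with $0\leq r<k$.
   Context: Lines in $\mathbb{R}P^2$ are in general position if no three pass through a common point, and in bounded position if all pairwise intersections lie in $\mathbb{R}^2$. The graph $G$ has as vertices the pairwise intersection points of the lines; two vertices are joined by an edge if some line of the arrangement contains both and no third vertex lies between them on that line; the edge is the closed segment joining them. An alcove is a subset $V\subset\mathbb{R}^2$ which is compact, convex and connected, whose boundary is a union of edges of $G$ belonging to distinct lines, and which contains no proper subset with these two properties. For a convex polygon $V$ whose vertices are vertices of $G$ lying on distinct lines, its vertex number is the number of vertices of $G$ lying either in the interior of $V$ or in the interior of one of the line segments forming the boundary of $V$. *)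

(* Defs.v *)
From HB Require Import structures.
From mathcomp Require Import all_boot all_order all_algebra.
From mathcomp Require Import all_classical all_reals all_analysis.
Set Implicit Arguments. Unset Strict Implicit. Unset Printing Implicit Defensive.
Import Order.TTheory GRing.Theory Num.Theory.
Import numFieldNormedType.Exports.
Local Open Scope ring_scope.
Local Open Scope classical_set_scope.

Section Arr.
Variable R : realType.

(* An affine line a*x + b*y = c in R^2 (nondegeneracy (a,b) <> 0 is
   required in the arrangement hypothesis). *)
Record line := Line { la : R; lb : R; lc : R }.

Definition on_line (L : line) (p : R * R) : Prop :=
  la L * p.1 + lb L * p.2 = lc L.

(* Bounded position: any two
   distinct lines meet in exactly one point of R^2 (distinct, non parallel,
   none is the line at infinity). *)
Definition bounded_general_position n (A : 'I_n -> line) : Prop :=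
  (forall i, (la (A i), lb (A i)) != (0, 0)) /\
  (forall i j, i != j -> exists! p, on_line (A i) p /\ on_line (A j) p) /\
  (forall (i j k : 'I_n) p, i != j -> j != k -> i != k ->
     on_line (A i) p -> on_line (A j) p -> on_line (A k) p -> False).

Definition is_vertex n (A : 'I_n -> line) (p : R * R) : Prop :=
  exists i j, i != j /\ on_line (A i) p /\ on_line (A j) p.

Definition lerp (a b : R * R) (t : R) : R * R :=
  (a.1 + t * (b.1 - a.1), a.2 + t * (b.2 - a.2)).

Definition open_seg (a b : R * R) : set (R * R) :=
  fun x => exists t, 0 < t < 1 /\ x = lerp a b t.

Definition closed_seg (a b : R * R) : set (R * R) :=
  fun x => exists t, 0 <= t <= 1 /\ x = lerp a b t.

Definition is_edge_on n (A : 'I_n -> line) (a b : R * R) (i : 'I_n) : Prop :=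
  is_vertex A a /\ is_vertex A b /\ a != b /\
  on_line (A i) a /\ on_line (A i) b /\
  (forall x, is_vertex A x -> ~ open_seg a b x).

Definition is_edge n (A : 'I_n -> line) (a b : R * R) : Prop :=
  exists i, is_edge_on A a b i.

Definition convex_set (S : set (R * R)) : Prop :=
  forall x y t, S x -> S y -> 0 <= t <= 1 -> S (lerp x y t).

Definition boundary (S : set (R * R)) : set (R * R) :=
  closure S `\` interior S.

Definition alcove_cand n (A : 'I_n -> line) (V : set (R * R)) : Prop :=
  compact V /\ convex_set V /\ connected V /\ interior V !=set0 /\
  exists s : seq ((R * R) * (R * R) * 'I_n),
    uniq (map snd s) /\
    (forall e, e \in s -> is_edge_on A e.1.1 e.1.2 e.2) /\
    (forall x, boundary V x <-> exists2 e, e \in s & closed_seg e.1.1 e.1.2 x).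

Definition is_alcove n (A : 'I_n -> line) (V : set (R * R)) : Prop :=
  alcove_cand A V /\ forall W, W `<` V -> ~ alcove_cand A W.

Definition det2 (u v : R * R) : R := u.1 * v.2 - u.2 * v.1.
Definition sub2 (u v : R * R) : R * R := (u.1 - v.1, u.2 - v.2).

(* p_0, ..., p_{m-1} (cyclically) are the vertices of a strictly convex
   m-gon, m >= 3, listed in cyclic order (either orientation) *)
Definition convex_polygon m (p : 'I_m -> R * R) : Prop :=
  (3 <= m)%N /\
  exists s : R, (s = 1 \/ s = -1) /\
    forall i j : 'I_m, j != i -> j != ordS i ->
      0 < s * det2 (sub2 (p (ordS i)) (p i)) (sub2 (p j) (p i)).

Definition G_polygon n (A : 'I_n -> line) m (p : 'I_m -> R * R) : Prop :=
  convex_polygon p /\ (forall i, is_vertex A (p i)) /\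
  exists sigma : 'I_m -> 'I_n, injective sigma /\
    forall i, on_line (A (sigma i)) (p i) /\ on_line (A (sigma i)) (p (ordS i)).

Definition hull m (p : 'I_m -> R * R) : set (R * R) :=
  fun x => exists w : 'I_m -> R, (forall i, 0 <= w i) /\ \sum_i w i = 1 /\
    x = (\sum_i w i * (p i).1, \sum_i w i * (p i).2).

Definition card_is (T : eqType) (S : set T) (k : nat) : Prop :=
  exists s : seq T, uniq s /\ (forall x, x \in s <-> S x) /\ size s = k.

Definition vertex_number n (A : 'I_n -> line) m (p : 'I_m -> R * R) (k : nat) : Prop :=
  card_is (fun x => is_vertex A x /\
    (interior (hull p) x \/ exists i, open_seg (p i) (p (ordS i)) x)) k.

Definition is_side m (p : 'I_m -> R * R) (a b : R * R) : Prop :=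
  exists i, (p i = a /\ p (ordS i) = b) \/ (p i = b /\ p (ordS i) = a).

End Arr.

(* Main.v *)
Require Import Defs.
From HB Require Import structures.
From mathcomp Require Import all_boot all_order all_algebra.
From mathcomp Require Import all_classical all_reals all_analysis.
From mathcomp Require Import ring lra zify.
Set Implicit Arguments. Unset Strict Implicit. Unset Printing Implicit Defensive.
Import Order.TTheory GRing.Theory Num.Theory.
Import numFieldNormedType.Exports.
Local Open Scope ring_scope.
Local Open Scope classical_set_scope.

Section Gen.
Variable R : realType.
Implicit Types (a b x y : R * R) (t u : R).

Definition aff3 (al be ga : R) (y : R * R) := al * y.1 + be * y.2 + ga.

Definition sdet (s : R) (a b y : R * R) := s * det2 (sub2 b a) (sub2 y a).

Lemma sdetE s a b y : sdet s a b y =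
  aff3 (- s * (b.2 - a.2)) (s * (b.1 - a.1))
       (s * (- (b.1 - a.1) * a.2 + (b.2 - a.2) * a.1)) y.
Proof. rewrite /sdet /aff3 /det2 /sub2 /=; ring. Qed.

Lemma aff3_lerp al be ga a b t :
  aff3 al be ga (lerp a b t) = aff3 al be ga a + t * (aff3 al be ga b - aff3 al be ga a).
Proof. rewrite /aff3 /lerp /=; ring. Qed.

Lemma sdet_lerp s a b c d t :
  sdet s a b (lerp c d t) = sdet s a b c + t * (sdet s a b d - sdet s a b c).
Proof. by rewrite !sdetE aff3_lerp. Qed.

Lemma sdet_base s a b y u : sdet s (lerp a b u) b y = (1 - u) * sdet s a b y.
Proof. rewrite /sdet /lerp /det2 /sub2 /=; ring. Qed.

Lemma sdet_end s a b y u : sdet s a (lerp a b u) y = u * sdet s a b y.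
Proof. rewrite /sdet /lerp /det2 /sub2 /=; ring. Qed.

Lemma sdet_a s a b : sdet s a b a = 0.
Proof. rewrite /sdet /det2 /sub2 /=; ring. Qed.

Lemma sdet_b s a b : sdet s a b b = 0.
Proof. rewrite /sdet /det2 /sub2 /=; ring. Qed.

Definition affL (L : line R) y := la L * y.1 + lb L * y.2 - lc L.

Lemma on_lineE L y : on_line L y <-> affL L y = 0.
Proof.
rewrite /on_line /affL; split=> [->|/eqP]; first by rewrite subrr.
by rewrite subr_eq0 => /eqP.
Qed.

Lemma affL_lerp L a b t : affL L (lerp a b t) = affL L a + t * (affL L b - affL L a).
Proof. rewrite /affL /lerp /=; ring. Qed.

Lemma on_line_lerp L a b t : on_line L a -> on_line L b -> on_line L (lerp a b t).
Proof. rewrite !on_lineE affL_lerp => -> ->; ring. Qed.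

Lemma collinear_det L a b y : (la L, lb L) != (0, 0) ->
  on_line L a -> on_line L b -> on_line L y -> det2 (sub2 b a) (sub2 y a) = 0.
Proof.
move=> nz; rewrite !on_lineE /affL /det2 /sub2 /= => ha hb hy.
have e1 : la L * (b.1 - a.1) + lb L * (b.2 - a.2) = 0.
  have -> : la L * (b.1 - a.1) + lb L * (b.2 - a.2) =
    (la L * b.1 + lb L * b.2 - lc L) - (la L * a.1 + lb L * a.2 - lc L) by ring.
  by rewrite ha hb subrr.
have e2 : la L * (y.1 - a.1) + lb L * (y.2 - a.2) = 0.
  have -> : la L * (y.1 - a.1) + lb L * (y.2 - a.2) =
    (la L * y.1 + lb L * y.2 - lc L) - (la L * a.1 + lb L * a.2 - lc L) by ring.
  by rewrite ha hy subrr.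
set D := _ - _.
have h1 : la L * D = 0.
  rewrite /D; apply/eqP; rewrite -subr_eq0; apply/eqP.
  have -> : la L * ((b.1 - a.1) * (y.2 - a.2) - (b.2 - a.2) * (y.1 - a.1)) - 0 =
     (y.2 - a.2) * (la L * (b.1 - a.1) + lb L * (b.2 - a.2)) -
     (b.2 - a.2) * (la L * (y.1 - a.1) + lb L * (y.2 - a.2)) by ring.
  by rewrite e1 e2; ring.
have h2 : lb L * D = 0.
  rewrite /D; apply/eqP; rewrite -subr_eq0; apply/eqP.
  have -> : lb L * ((b.1 - a.1) * (y.2 - a.2) - (b.2 - a.2) * (y.1 - a.1)) - 0 =
     (b.1 - a.1) * (la L * (y.1 - a.1) + lb L * (y.2 - a.2)) -
     (y.1 - a.1) * (la L * (b.1 - a.1) + lb L * (b.2 - a.2)) by ring.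
  by rewrite e1 e2; ring.
apply/eqP; apply: contraNT nz => Dn0.
move: h1 h2 => /eqP; rewrite mulf_eq0 (negbTE Dn0) orbF => /eqP ->.
move/eqP; rewrite mulf_eq0 (negbTE Dn0) orbF => /eqP -> //.
Qed.

Lemma box_nbhs (x : R*R) (P : set (R*R)) :
  (exists e : R, 0<e /\ forall y : R*R, `|x.1 - y.1| < e -> `|x.2-y.2| < e -> P y) -> nbhs x P.
Proof.
case=> e [e0 H]; apply/nbhs_ballP; exists e => //= y [/= h1 h2].
by move: h1 h2; rewrite /ball /=; apply: H.
Qed.

Lemma nbhs_box (x : R*R) (P : set (R*R)) :
  nbhs x P -> exists e : R, 0<e /\ forall y : R*R, `|x.1 - y.1| < e -> `|x.2-y.2| < e -> P y.
Proof.
move/nbhs_ballP=> [e /= e0 H]; exists e; split => // y h1 h2.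
by apply: H; split; rewrite /ball /=.
Qed.

Lemma interior_aff_pos (S : set (R*R)) al be ga x :
  (al != 0) || (be != 0) -> (forall y, S y -> 0 <= aff3 al be ga y) ->
  interior S x -> 0 < aff3 al be ga x.
Proof.
move=> nz Hge /nbhs_box [e [e0 He]].
rewrite ltNge; apply/negP => hle.
set K := `|al| + `|be| + 1.
have K0 : 0 < K by rewrite /K; have := normr_ge0 al; have := normr_ge0 be; lra.
set t := e / (2 * K).
have t0 : 0 < t by rewrite /t divr_gt0 // mulr_gt0.
have tK : t * K = e / 2 by rewrite /t; field; lra.
have q2 : 0 < al ^+ 2 + be ^+ 2.
  case/orP: nz => nz.
    have := sqr_ge0 be; have : 0 < al ^+ 2 by rewrite exprn_even_gt0.
    lra.
  have := sqr_ge0 al; have : 0 < be ^+ 2 by rewrite exprn_even_gt0.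
  lra.
have := Hge (x.1 - t * al, x.2 - t * be).
have -> : aff3 al be ga (x.1 - t * al, x.2 - t * be) =
   aff3 al be ga x - t * (al ^+ 2 + be ^+ 2) by rewrite /aff3 /=; ring.
have hneg : aff3 al be ga x - t * (al ^+ 2 + be ^+ 2) < 0.
  have : 0 < t * (al ^+ 2 + be ^+ 2) by rewrite mulr_gt0.
  lra.
have h1 : `|x.1 - (x.1 - t * al, x.2 - t * be).1| < e.
  rewrite /= opprB addrC subrK normrM (gtr0_norm t0).
  have : `|al| <= K by rewrite /K; have := normr_ge0 be; lra.
  have := normr_ge0 al; nra.
have h2 : `|x.2 - (x.1 - t * al, x.2 - t * be).2| < e.
  rewrite /= opprB addrC subrK normrM (gtr0_norm t0).
  have : `|be| <= K by rewrite /K; have := normr_ge0 al; lra.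
  have := normr_ge0 be; nra.
move=> H; have := H (He _ h1 h2); lra.
Qed.

End Gen.

Section Hull.
Variables (R : realType) (m : nat) (p : 'I_m -> R * R).

Lemma hull_comb (I : finType) (y : I -> R * R) (c : I -> R) :
  (forall i, 0 <= c i) -> \sum_i c i = 1 -> (forall i, hull p (y i)) ->
  hull p (\sum_i c i * (y i).1, \sum_i c i * (y i).2).
Proof.
move=> c0 c1 hy.
have /choice [w Hw] := hy.
exists (fun j => \sum_i c i * w i j); split; [|split].
- move=> j; apply: sumr_ge0 => i _; apply: mulr_ge0 => //; by case: (Hw i).
- rewrite exchange_big /= -c1; apply: eq_bigr => i _.
  by rewrite -mulr_sumr; case: (Hw i) => _ [-> _]; rewrite mulr1.
- have E k : \sum_i c i * (if k then (y i).1 else (y i).2) =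
     \sum_j (\sum_i c i * w i j) * (if k then (p j).1 else (p j).2).
    under [RHS]eq_bigr do rewrite mulr_suml.
    rewrite exchange_big /=; apply: eq_bigr => i _.
    case: (Hw i) => _ [_ ->]; case: k => /=; rewrite mulr_sumr;
      by apply: eq_bigr => j _; rewrite mulrA.
  by rewrite (E true) (E false).
Qed.

Lemma hull_corner i : hull p (p i).
Proof.
exists (fun j => (j == i)%:R); split; [|split].
- by move=> j; rewrite ler0n.
- by rewrite (bigD1 i) //= eqxx big1 ?addr0 // => j /negPf ->.
- rewrite (bigD1 i) //= eqxx mul1r big1 ?addr0; last by move=> j /negPf ->; rewrite mul0r.
  rewrite (bigD1 i) //= eqxx mul1r big1 ?addr0; last by move=> j /negPf ->; rewrite mul0r.
  by case: (p i).
Qed.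

Lemma hull_lerp a b t : hull p a -> hull p b -> 0 <= t <= 1 -> hull p (lerp a b t).
Proof.
move=> [wa [wa0 [wa1 ->]]] [wb [wb0 [wb1 ->]]] /andP [t0 t1].
exists (fun j => (1 - t) * wa j + t * wb j); split; [|split].
- move=> j; apply: addr_ge0; apply: mulr_ge0 => //; lra.
- by rewrite big_split /= -!mulr_sumr wa1 wb1; ring.
- rewrite /lerp /=; congr (_, _).
  + rewrite [RHS](eq_bigr (fun j => wa j * (p j).1 + t * (wb j * (p j).1 - wa j * (p j).1))).
      by rewrite big_split /= -mulr_sumr sumrB.
    by move=> j _; ring.
  + rewrite [RHS](eq_bigr (fun j => wa j * (p j).2 + t * (wb j * (p j).2 - wa j * (p j).2))).
      by rewrite big_split /= -mulr_sumr sumrB.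
    by move=> j _; ring.
Qed.

Lemma hull_aff al be ga x w : (forall i, 0 <= w i) -> \sum_i w i = 1 ->
  x = (\sum_i w i * (p i).1, \sum_i w i * (p i).2) ->
  aff3 al be ga x = \sum_i w i * aff3 al be ga (p i).
Proof.
move=> _ w1 ->; rewrite /aff3 /=.
rewrite [RHS](eq_bigr (fun i => al * (w i * (p i).1) + be * (w i * (p i).2) + ga * w i)).
  by rewrite !big_split /= -!mulr_sumr w1 mulr1.
by move=> i _; ring.
Qed.

Lemma hull_aff_ge0 al be ga x : (forall i, 0 <= aff3 al be ga (p i)) -> hull p x ->
  0 <= aff3 al be ga x.
Proof.
move=> H [w [w0 [w1 ->]]]; rewrite (hull_aff _ _ _ w0 w1 erefl).
by apply: sumr_ge0 => i _; apply: mulr_ge0.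
Qed.

Lemma hull_aff_gt0 al be ga x : (forall i, 0 < aff3 al be ga (p i)) -> hull p x ->
  0 < aff3 al be ga x.
Proof.
move=> H [w [w0 [w1 ->]]]; rewrite (hull_aff _ _ _ w0 w1 erefl).
rewrite lt0r sumr_ge0 ?andbT; last by move=> i _; apply: mulr_ge0 => //; apply: ltW.
apply/eqP => /psumr_eq0P h.
have h' : forall i, w i * aff3 al be ga (p i) = 0.
  by move=> i; apply: h => // j _; apply: mulr_ge0 => //; apply: ltW.
have : \sum_i w i = 0.
  apply: big1 => i _; have /eqP := h' i; rewrite mulf_eq0 => /orP [/eqP //|/eqP e].
  by have := H i; rewrite e ltxx.
by rewrite w1 => /eqP; rewrite oner_eq0.
Qed.

End Hull.

Section IC.
Variables (R : realType) (m : nat) (p : 'I_m -> R * R).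

Lemma hull_comb4 (y0 y1 y2 y3 : R * R) (c0 c1 c2 c3 : R) :
  hull p y0 -> hull p y1 -> hull p y2 -> hull p y3 ->
  0 <= c0 -> 0 <= c1 -> 0 <= c2 -> 0 <= c3 -> c0 + c1 + c2 + c3 = 1 ->
  hull p (c0 * y0.1 + c1 * y1.1 + c2 * y2.1 + c3 * y3.1,
          c0 * y0.2 + c1 * y1.2 + c2 * y2.2 + c3 * y3.2).
Proof.
move=> h0 h1 h2 h3 p0 p1 p2 p3 s1.
have := @hull_comb R m p 'I_4 (fun i => nth y0 [:: y0; y1; y2; y3] i)
  (fun i => nth 0 [:: c0; c1; c2; c3] i).
rewrite !big_ord_recr !big_ord0 /= !add0r.
apply.
- by case=> [[|[|[|[|]]]] ?].
- by [].
- by case=> [[|[|[|[|]]]] ?].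
Qed.

Lemma interior_crit (y0 y1 y2 y3 : R * R) (c0 c1 c2 c3 : R) x :
  hull p y0 -> hull p y1 -> hull p y2 -> hull p y3 ->
  0 < c0 -> 0 < c1 -> 0 < c2 -> 0 <= c3 -> c0 + c1 + c2 + c3 = 1 ->
  det2 (sub2 y1 y0) (sub2 y2 y0) != 0 ->
  x = (c0 * y0.1 + c1 * y1.1 + c2 * y2.1 + c3 * y3.1,
       c0 * y0.2 + c1 * y1.2 + c2 * y2.2 + c3 * y3.2) ->
  interior (hull p) x.
Proof.
move=> h0 h1 h2 h3 p0 p1 p2 p3 s1 Dn0 ->.
set u := sub2 y1 y0; set v := sub2 y2 y0; set D := det2 u v.
set x0 := (_, _).
set ka := Num.min c0 (Num.min c1 c2).
have ka0 : 0 < ka by rewrite /ka !lt_min p0 p1 p2.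
have kac0 : ka <= c0 by rewrite /ka ge_min lexx.
have kac1 : ka <= c1 by rewrite /ka !ge_min lexx orbT.
have kac2 : ka <= c2 by rewrite /ka !ge_min lexx !orbT.
set M := `|u.1| + `|u.2| + `|v.1| + `|v.2| + 1.
have M0 : 0 < M.
  rewrite /M; have := normr_ge0 u.1; have := normr_ge0 u.2;
  have := normr_ge0 v.1; have := normr_ge0 v.2; lra.
have aD0 : 0 < `|D| by rewrite normr_gt0.
set e := ka * `|D| / (2 * M).
have e0 : 0 < e by rewrite /e divr_gt0 ?mulr_gt0.
have eM : e * M = ka * `|D| / 2 by rewrite /e; field; lra.
apply: box_nbhs; exists e; split => // y hy1 hy2.
set d1 := y.1 - x0.1; set d2 := y.2 - x0.2.
have hd1 : `|d1| < e by rewrite /d1 distrC.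
have hd2 : `|d2| < e by rewrite /d2 distrC.
set al := (d1 * v.2 - d2 * v.1) / D.
set be := (u.1 * d2 - u.2 * d1) / D.
have bound : forall (w1 w2 : R), `|w1| + `|w2| <= M ->
    `|d1 * w1 - d2 * w2| / `|D| <= ka / 2.
  move=> w1 w2 hw.
  rewrite ler_pdivrMr //.
  have -> : ka / 2 * `|D| = e * M by rewrite eM; field.
  apply: le_trans (ler_normB _ _) _.
  rewrite !normrM.
  have := normr_ge0 w1; have := normr_ge0 w2; have := normr_ge0 d1;
  have := normr_ge0 d2; nra.
have hal : `|al| <= ka / 2.
  rewrite /al normrM normfV; apply: bound.
  rewrite /M; have := normr_ge0 u.1; have := normr_ge0 u.2; lra.
have hbe : `|be| <= ka / 2.
  rewrite /be normrM normfV.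
  have -> : u.1 * d2 - u.2 * d1 = - (d1 * u.2 - d2 * u.1) by ring.
  rewrite normrN; apply: bound.
  rewrite /M; have := normr_ge0 v.1; have := normr_ge0 v.2; lra.
have e1 : al * u.1 + be * v.1 = d1.
  rewrite /al /be; move: Dn0; rewrite /D /det2 => Dn0; field => //.
have e2 : al * u.2 + be * v.2 = d2.
  rewrite /al /be; move: Dn0; rewrite /D /det2 => Dn0; field => //.
have a1 := ler_norm al; have a2 : - al <= `|al| by rewrite -normrN ler_norm.
have b1 := ler_norm be; have b2 : - be <= `|be| by rewrite -normrN ler_norm.
have := @hull_comb4 y0 y1 y2 y3 (c0 - al - be) (c1 + al) (c2 + be) c3 h0 h1 h2 h3.
have -> : y = ((c0 - al - be) * y0.1 + (c1 + al) * y1.1 + (c2 + be) * y2.1 + c3 * y3.1,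
   (c0 - al - be) * y0.2 + (c1 + al) * y1.2 + (c2 + be) * y2.2 + c3 * y3.2).
  rewrite [y in LHS]surjective_pairing; congr (_, _).
    transitivity (x0.1 + d1); first by rewrite /d1; ring.
    by rewrite -e1 /x0 /u /v /sub2 /=; ring.
  transitivity (x0.2 + d2); first by rewrite /d2; ring.
  by rewrite -e2 /x0 /u /v /sub2 /=; ring.
apply; try lra.
Qed.

End IC.

Lemma card_sub (T : eqType) (S S' : set T) k q : card_is S k ->
  (forall x, S' x -> S x) -> S q -> ~ S' q -> exists2 r, (r < k)%N & card_is S' r.
Proof.
move=> [s [us [ms sk]]] sub Sq nSq.
exists (size (seq.filter (fun x => `[< S' x >]) s)); last first.
  exists (seq.filter (fun x => `[< S' x >]) s); split; [exact: filter_uniq|split=> //].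
  move=> x; rewrite mem_filter; split; first by case/andP => /asboolP.
  by move=> h; rewrite (asboolT h) /=; apply/ms/sub.
rewrite size_filter -sk -(count_predC (fun x => `[< S' x >]) s) -addn1 leq_add2l.
rewrite -has_count; apply/hasP; exists q; first by apply/ms.
by rewrite /= (asboolF nSq).
Qed.

Lemma neq_mod m a d1 d2 : (d1 < d2 < d1 + m)%N -> ((a + d2) %% m != (a + d1) %% m)%N.
Proof.
move=> /andP [h1 h2]; apply/negP => h.
have e : (a + d2 = (a + d1) + (d2 - d1))%N by lia.
have h' : (a + d1 + (d2 - d1) == (a + d1) + 0 %[mod m])%N by rewrite addn0 -e.
move: h'; rewrite eqn_modDl mod0n modn_small; lia.
Qed.


Section Gen2.
Variable R : realType.
Implicit Types (a b x y : R * R) (t u : R).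

Lemma open_seg_sym a b x : open_seg a b x -> open_seg b a x.
Proof.
case=> t [/andP [t0 t1] ->]; exists (1 - t); split; first by apply/andP; lra.
rewrite /lerp /=; congr (_, _); ring.
Qed.

Lemma lerp_eq_a a b t : lerp a b t = a -> t != 0 -> b = a.
Proof.
case: a b => a1 a2 [b1 b2]; rewrite /lerp /= => -[e1 e2] t0.
have h1 : t * (b1 - a1) = 0 by apply: (addrI a1); rewrite addr0.
have h2 : t * (b2 - a2) = 0 by apply: (addrI a2); rewrite addr0.
move: h1 h2 => /eqP; rewrite mulf_eq0 (negbTE t0) subr_eq0 => /eqP ->.
by move=> /eqP; rewrite mulf_eq0 (negbTE t0) subr_eq0 => /eqP ->.
Qed.

Lemma lerp_eq_b a b t : lerp a b t = b -> t != 1 -> b = a.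
Proof.
move=> e t1; apply/esym; apply: (@lerp_eq_a b a (1 - t)).
  by rewrite -{2}e; case: a b {e} => ? ? [? ?]; rewrite /lerp /=; congr (_, _); ring.
by rewrite subr_eq0 eq_sym.
Qed.

End Gen2.

Section Poly.
Variables (R : realType) (m : nat) (p : 'I_m -> R * R) (s : R).
Hypothesis hm : (2 < m)%N.
Hypothesis hconv : forall i j : 'I_m, j != i -> j != ordS i ->
      0 < s * det2 (sub2 (p (ordS i)) (p i)) (sub2 (p j) (p i)).

Lemma m0 : (0 < m)%N. Proof. by apply: leq_trans hm. Qed.

Definition idx (k : nat) : 'I_m := Ordinal (ltn_pmod k m0).
Definition P k := p (idx k).
Definition DD k y := sdet s (P k) (P k.+1) y.

Lemma idx_val (i : 'I_m) : idx i = i.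
Proof. by apply: val_inj; rewrite /= modn_small. Qed.

Lemma P_val (i : 'I_m) : P i = p i.
Proof. by rewrite /P idx_val. Qed.

Lemma ordS_idx k : ordS (idx k) = idx k.+1.
Proof. by apply: val_inj; rewrite /= -addn1 modnDml addn1. Qed.

Lemma P_ordS (i : 'I_m) : P i.+1 = p (ordS i).
Proof. by rewrite /P -ordS_idx idx_val. Qed.

Lemma idx_eq k l : (idx k == idx l) = (k %% m == l %% m)%N.
Proof. by rewrite -val_eqE. Qed.

Lemma P_mod k l : (k %% m = l %% m)%N -> P k = P l.
Proof. by move=> e; rewrite /P; congr p; apply: val_inj. Qed.

Lemma DD_pos k l : (l %% m != k %% m)%N -> (l %% m != k.+1 %% m)%N -> 0 < DD k (P l).
Proof.
move=> h1 h2; have := hconv (i := idx k) (j := idx l).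
by rewrite ordS_idx !idx_eq; apply.
Qed.

Lemma DD_ge0 k l : 0 <= DD k (P l).
Proof.
case: (eqVneq (l %% m) (k %% m))%N => [e|h1].
  by rewrite (P_mod e) /DD sdet_a.
case: (eqVneq (l %% m) (k.+1 %% m))%N => [e|h2].
  by rewrite (P_mod e) /DD sdet_b.
by apply: ltW; apply: DD_pos.
Qed.

Lemma mod2 k : (k.+2 %% m != k %% m)%N /\ (k.+2 %% m != k.+1 %% m)%N.
Proof.
split.
  have := @neq_mod m k 0 2; rewrite addn0 addn2; apply; lia.
have := @neq_mod m k 1 2; rewrite addn1 addn2; apply; lia.
Qed.

Lemma DD_P2 k : 0 < DD k (P k.+2).
Proof. by case: (mod2 k) => ? ?; apply: DD_pos. Qed.

Lemma DD_hull k y : hull p y -> 0 <= DD k y.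
Proof.
rewrite /DD sdetE => h; apply: hull_aff_ge0 h => i.
by rewrite -sdetE -P_val; apply: DD_ge0.
Qed.

Lemma DD_int k y : interior (hull p) y -> 0 < DD k y.
Proof.
rewrite /DD sdetE => h; apply: interior_aff_pos h; last first.
  by move=> z hz; rewrite -sdetE; apply: DD_hull.
rewrite -negb_and; apply/negP => /andP [/eqP e1 /eqP e2].
have := DD_P2 k; rewrite /DD sdetE.
have := sdet_a s (P k) (P k.+1); rewrite sdetE /aff3 e1 e2 !mul0r !add0r => ->.
by rewrite ltxx.
Qed.

Lemma DD_lerp_pos k a u : (a %% m != k %% m)%N -> 0 < u < 1 ->
  0 < DD k (lerp (P a) (P a.+1) u).
Proof.
move=> ha /andP [u0 u1]; rewrite /DD sdet_lerp -/(DD k _) -/(DD k _).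
have g0 := DD_ge0 k a; have g1 := DD_ge0 k a.+1.
have -> : DD k (P a) + u * (DD k (P a.+1) - DD k (P a)) =
   (1 - u) * DD k (P a) + u * DD k (P a.+1) by ring.
case: (eqVneq (a %% m) (k.+1 %% m))%N => [e|h2].
  have e' : (a.+1 %% m = k.+2 %% m)%N by rewrite -addn1 -modnDml e modnDml addn1.
  have : 0 < DD k (P a.+1) by rewrite (P_mod e'); apply: DD_P2.
  move=> h; have h1 : 0 <= (1 - u) * DD k (P a) by apply: mulr_ge0 => //; lra.
  have h3 : 0 < u * DD k (P a.+1) by apply: mulr_gt0.
  lra.
have h : 0 < DD k (P a) by apply: DD_pos.
have h1 : 0 < (1 - u) * DD k (P a) by apply: mulr_gt0 => //; lra.
have h3 : 0 <= u * DD k (P a.+1) by apply: mulr_ge0 => //; lra.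
lra.
Qed.

Lemma P_neq k : P k.+1 != P k.
Proof.
apply/eqP => e; have := DD_P2 k; rewrite /DD e /sdet /sub2 /det2 /= !subrr.
by rewrite !mul0r subrr mulr0 ltxx.
Qed.

Lemma corner_not (j : 'I_m) :
  ~ (interior (hull p) (p j) \/ exists i, open_seg (p i) (p (ordS i)) (p j)).
Proof.
case.
  move=> /(DD_int j); rewrite /DD -P_val sdet_a; by rewrite ltxx.
case=> i [t [/andP [t0 t1] e]].
case: (eqVneq j i) => [ji|nji].
  subst j; move: (lerp_eq_a (esym e)); rewrite gt_eqF // => /(_ isT) h.
  by move: (P_neq i); rewrite P_ordS P_val h eqxx.
case: (eqVneq j (ordS i)) => [ji|nji2].
  subst j; move: (lerp_eq_b (esym e)); rewrite lt_eqF // => /(_ isT) h.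
  by move: (P_neq i); rewrite P_ordS P_val h eqxx.
have := hconv nji nji2; rewrite e -/(sdet s _ _ _) sdet_lerp sdet_a sdet_b.
by rewrite subrr mulr0 addr0 ltxx.
Qed.

End Poly.

Lemma neqm m a d1 d2 : (d1 != d2)%N -> (d1 < d2 + m)%N -> (d2 < d1 + m)%N ->
  ((a + d1) %% m != (a + d2) %% m)%N.
Proof.
move=> ne h1 h2; case: (ltngtP d1 d2) ne => // h _.
  by rewrite eq_sym; apply: neq_mod; rewrite h.
by apply: neq_mod; rewrite h.
Qed.

Lemma cut_ident (R : realType) (s : R) (L : line R) q1 q2 y z :
  affL L q1 = 0 -> affL L q2 = 0 ->
  sdet s q2 q1 y * affL L z = sdet s q2 q1 z * affL L y.
Proof.
move=> h1 h2; apply/eqP; rewrite -subr_eq0; apply/eqP.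
have -> : sdet s q2 q1 y * affL L z - sdet s q2 q1 z * affL L y =
  s * ((affL L q1 - affL L q2) * det2 (sub2 z q2) (sub2 y q2) +
     affL L q2 * (det2 (sub2 q1 q2) (sub2 y q2) - det2 (sub2 q1 q2) (sub2 z q2))).
  by rewrite /sdet /affL /det2 /sub2 /=; ring.
by rewrite h1 h2; ring.
Qed.

Lemma sdet_cutref (R : realType) (s : R) a b q u :
  sdet s q (lerp a b u) b = (1 - u) * sdet s a b q.
Proof. rewrite /sdet /lerp /det2 /sub2 /=; ring. Qed.

Lemma u01 (R : realType) (a b : R) : a * b < 0 -> 0 < a / (a - b) < 1.
Proof.
move=> ab.
have Dn : a - b != 0.
  apply/eqP => h; have e : a = b by apply/eqP; rewrite -subr_eq0 h.
  move: ab; rewrite e; have := sqr_ge0 b; rewrite expr2; lra.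
have e : a / (a - b) * (a - b) = a by rewrite divfK.
have e2 : (1 - a / (a - b)) * (a - b) = - b by rewrite mulrBl e mul1r; ring.
move: e e2; set u := a / (a - b) => e e2.
have [a0|a0|a0] := ltgtP a 0.
- have b0 : 0 < b by nra.
  apply/andP; split; nra.
- have b0 : b < 0 by nra.
  apply/andP; split; nra.
- by move: ab; rewrite a0 mul0r ltxx.
Qed.

Lemma open_sub1 (R : realType) (a b x : R * R) u : open_seg (lerp a b u) b x -> 0 < u < 1 -> open_seg a b x.
Proof.
case=> t [/andP [t0 t1] ->] /andP [u0 u1]; exists (u + t * (1 - u)); split.
  apply/andP; split; nra.
by rewrite /lerp /=; congr (_, _); ring.
Qed.

Lemma open_sub2 (R : realType) (a b x : R * R) u : open_seg a (lerp a b u) x -> 0 < u < 1 -> open_seg a b x.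
Proof.
case=> t [/andP [t0 t1] ->] /andP [u0 u1]; exists (t * u); split.
  apply/andP; split; nra.
by rewrite /lerp /=; congr (_, _); ring.
Qed.

Section Cut.
Variables (R : realType) (n : nat) (A : 'I_n -> line R) (m : nat) (V : 'I_m -> R * R)
  (s : R) (sigma : 'I_m -> 'I_n) (L : 'I_n) (ep : R) (j1 c : nat).
Hypothesis hgp : bounded_general_position A.
Hypothesis hm : (2 < m)%N.
Hypothesis hconv : forall i j : 'I_m, j != i -> j != ordS i ->
      0 < s * det2 (sub2 (V (ordS i)) (V i)) (sub2 (V j) (V i)).
Hypothesis hvert : forall i, is_vertex A (V i).
Hypothesis hsinj : injective sigma.
Hypothesis hson : forall i, on_line (A (sigma i)) (V i) /\ on_line (A (sigma i)) (V (ordS i)).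
Hypothesis hL : forall k, L != sigma k.
Hypothesis hep : ep != 0.
Hypothesis hs : s = 1 \/ s = -1.
Hypothesis hc1 : (1 < c)%N.
Hypothesis hc2 : (c < m)%N.

Local Notation PP := (P V hm).
Local Notation DV := (DD V s hm).
Definition F k := ep * affL (A L) (PP k).
Hypothesis hF1 : F j1 < 0.
Hypothesis hF2 : F (j1 + c).+1 < 0.
Hypothesis hF : forall l, (0 < l <= c)%N -> 0 < F (j1 + l).

Lemma on_P k : on_line (A (sigma (idx hm k))) (PP k) /\ on_line (A (sigma (idx hm k))) (PP k.+1).
Proof. by rewrite /P -ordS_idx; apply: hson. Qed.

Definition uu k := F k / (F k - F k.+1).
Definition cross k := lerp (PP k) (PP k.+1) (uu k).

Lemma cross_on k : F k * F k.+1 < 0 -> on_line (A L) (cross k).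
Proof.
move=> h; rewrite on_lineE.
have Dn : F k - F k.+1 != 0.
  apply/eqP => e; have : F k = F k.+1 by apply/eqP; rewrite -subr_eq0 e.
  move=> e'; move: h; rewrite e'; have := sqr_ge0 (F k.+1); rewrite expr2; lra.
have e0 : ep * affL (A L) (cross k) = F k + uu k * (F k.+1 - F k).
  by rewrite /cross affL_lerp /F; ring.
have e : ep * affL (A L) (cross k) = 0.
  by rewrite e0 /uu; field.
by move/eqP: e; rewrite mulf_eq0 (negbTE hep) /= => /eqP.
Qed.

Lemma cross_sig k : on_line (A (sigma (idx hm k))) (cross k).
Proof. by case: (on_P k) => h1 h2; apply: on_line_lerp. Qed.

Lemma cross_vertex k : F k * F k.+1 < 0 -> is_vertex A (cross k).
Proof.
move=> h; exists L, (sigma (idx hm k)); split; first exact: hL.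
by split; [apply: cross_on|apply: cross_sig].
Qed.

Lemma uu01 k : F k * F k.+1 < 0 -> 0 < uu k < 1.
Proof. exact: u01. Qed.

Lemma Fs1 : F j1 * F j1.+1 < 0.
Proof.
have := hF (l := 1); rewrite addn1 => /(_ (ltnW hc1)) h.
by rewrite pmulr_llt0.
Qed.

Lemma Fs2 : F (j1 + c) * F (j1 + c).+1 < 0.
Proof.
have h : 0 < F (j1 + c) by apply: hF; rewrite leqnn andbT; lia.
by rewrite pmulr_rlt0.
Qed.

Definition q1 := cross j1.
Definition q2 := cross (j1 + c).

Definition Wf (l : nat) := if l == 0%N then q1 else if l == c.+1 then q2 else PP (j1 + l).

Lemma md d1 d2 : (d1 != d2)%N -> (d1 < d2 + m)%N -> (d2 < d1 + m)%N ->
  ((j1 + d1) %% m != (j1 + d2) %% m)%N.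
Proof. exact: neqm. Qed.

Lemma pos_q1 k : (j1 %% m != k %% m)%N -> 0 < DV k q1.
Proof. by move=> h; apply: DD_lerp_pos => //; apply: uu01; apply: Fs1. Qed.

Lemma pos_q2 k : ((j1 + c) %% m != k %% m)%N -> 0 < DV k q2.
Proof. by move=> h; apply: DD_lerp_pos => //; apply: uu01; apply: Fs2. Qed.


Lemma Wf_0 : Wf 0 = q1. Proof. by []. Qed.
Lemma Wf_c1 : Wf c.+1 = q2. Proof. by rewrite /Wf /=  eqxx. Qed.
Lemma Wf_mid l : (0 < l <= c)%N -> Wf l = PP (j1 + l).
Proof.
move=> /andP [h1 h2]; rewrite /Wf; case: eqP => [e|_]; first by move: h1; rewrite e.
by case: eqP => [e|_] //; move: h2; rewrite e ltnn.
Qed.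

Lemma md0 d : (0 < d < m)%N -> ((j1 + d) %% m != j1 %% m)%N.
Proof. by move=> h; have := @md d 0; rewrite addn0; apply; lia. Qed.
Lemma md0' d : (0 < d < m)%N -> (j1 %% m != (j1 + d) %% m)%N.
Proof. by move=> h; rewrite eq_sym; apply: md0. Qed.
Lemma mdS d i : (d != i.+1)%N -> (d < i.+1 + m)%N -> (i.+1 < d + m)%N ->
  ((j1 + d) %% m != (j1 + i).+1 %% m)%N.
Proof. by move=> *; rewrite -addnS; apply: md. Qed.
Lemma mdS0 i : (i.+1 < m)%N -> (j1 %% m != (j1 + i).+1 %% m)%N.
Proof. by move=> h; rewrite -addnS eq_sym; apply: md0; lia. Qed.

Lemma q1_on : affL (A L) q1 = 0. Proof. by apply/on_lineE/cross_on/Fs1. Qed.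
Lemma q2_on : affL (A L) q2 = 0. Proof. by apply/on_lineE/cross_on/Fs2. Qed.

Lemma u1_01 : 0 < uu j1 < 1. Proof. exact/uu01/Fs1. Qed.
Lemma u2_01 : 0 < uu (j1 + c) < 1. Proof. exact/uu01/Fs2. Qed.

Lemma DVq2 : 0 < DV j1 q2.
Proof. by apply: pos_q2; apply: md0; lia. Qed.

Lemma cut_pos l : (0 < l <= c)%N -> 0 < sdet s q2 q1 (PP (j1 + l)).
Proof.
move=> hl.
have idt := @cut_ident R s (A L) q1 q2 (PP (j1 + l)) (PP (j1 + 1)) q1_on q2_on.
have Z : 0 < sdet s q2 q1 (PP (j1 + 1)).
  rewrite addn1 /q1 /cross sdet_cutref; apply: mulr_gt0; last exact: DVq2.
  by have := u1_01; move=> /andP [? ?]; lra.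
have Fy : 0 < F (j1 + l) by apply: hF.
have Fz : 0 < F (j1 + 1) by apply: hF; lia.
have e : sdet s q2 q1 (PP (j1 + l)) * F (j1 + 1) = sdet s q2 q1 (PP (j1 + 1)) * F (j1 + l).
  by rewrite /F mulrCA idt mulrCA.
have : 0 < sdet s q2 q1 (PP (j1 + 1)) * F (j1 + l) by apply: mulr_gt0.
by rewrite -e pmulr_lgt0.
Qed.

Lemma convW_nat (i j : nat) : (i <= c.+1)%N -> (j <= c.+1)%N -> j != i ->
  j != (i.+1 %% c.+2)%N -> 0 < sdet s (Wf i) (Wf (i.+1 %% c.+2)) (Wf j).
Proof.
move=> hi hj nji nji2.
have [ieq|ilt] : i = c.+1 \/ (i <= c)%N by lia.
  subst i; move: nji2; rewrite modnn => nji2.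
  rewrite Wf_0 Wf_c1 Wf_mid; first by apply: cut_pos; lia.
  lia.
move: nji2; rewrite modn_small; last lia.
move=> nji2.
have [i0|ipos] : i = 0%N \/ (0 < i)%N by lia.
  subst i; rewrite Wf_0 (Wf_mid (l := 1)) ?addn1; last lia.
  rewrite /q1 /cross sdet_base; apply: mulr_gt0.
    by have := u1_01; move=> /andP [? ?]; lra.
  rewrite -/(cross j1) -/q1 -/(DD V s hm j1 _).
  have [jc|jc] : j = c.+1 \/ (j <= c)%N by lia.
    by rewrite jc Wf_c1; exact: DVq2.
  rewrite Wf_mid; last lia.
  apply: (DD_pos hm hconv); first by apply: md0; lia.
  by rewrite -addn1; apply: md; lia.
have [ic|ic] : i = c \/ (i < c)%N by lia.
  subst i; rewrite Wf_c1 Wf_mid; last lia.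
  rewrite /q2 /cross sdet_end; apply: mulr_gt0.
    by have := u2_01; move=> /andP [? ?]; lra.
  rewrite -/(DD V s hm (j1 + c) _).
  have [j0|jpos] : j = 0%N \/ (0 < j)%N by lia.
    by rewrite j0 Wf_0; apply: pos_q1; apply: md0'; lia.
  rewrite Wf_mid; last lia.
  apply: (DD_pos hm hconv); first by apply: md; lia.
  by apply: mdS; lia.
rewrite Wf_mid ?(Wf_mid (l := i.+1)); try lia.
rewrite addnS -/(DD V s hm (j1 + i) _).
have [j0|jpos] : j = 0%N \/ (0 < j)%N by lia.
  by rewrite j0 Wf_0; apply: pos_q1; apply: md0'; lia.
have [jc|jc] : j = c.+1 \/ (j <= c)%N by lia.
  by rewrite jc Wf_c1; apply: pos_q2; apply: md; lia.
rewrite Wf_mid; last lia.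
apply: (DD_pos hm hconv); first by apply: md; lia.
by apply: mdS; lia.
Qed.

Definition W (i : 'I_c.+2) := Wf i.

Lemma convW : convex_polygon W.
Proof.
split; first by lia.
exists s; split => // i j nji nji2.
have := @convW_nat i j; rewrite /W /sdet; apply.
- by have := ltn_ord i; lia.
- by have := ltn_ord j; lia.
- by [].
- by [].
Qed.

Lemma PP_vertex k : is_vertex A (PP k). Proof. exact: hvert. Qed.

Lemma W_vertex i : is_vertex A (W i).
Proof.
rewrite /W /Wf; case: eqP => _; first exact/cross_vertex/Fs1.
case: eqP => _; first exact/cross_vertex/Fs2.
exact: PP_vertex.
Qed.

Definition sig' (i : 'I_c.+2) : 'I_n := if val i == c.+1 then L else sigma (idx hm (j1 + i)).

Lemma sig'_inj : injective sig'.
Proof.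
move=> x y; rewrite /sig'.
have hx := ltn_ord x; have hy := ltn_ord y.
case: eqP => ex; case: eqP => ey.
- by move=> _; apply: val_inj; rewrite ex ey.
- by move=> e; have := hL (idx hm (j1 + y)); rewrite e eqxx.
- by move=> e; have := hL (idx hm (j1 + x)); rewrite e eqxx.
- move=> /hsinj /eqP; rewrite idx_eq => e; apply: val_inj => /=.
  have ex' : (x != c.+1 :> nat) by apply/eqP.
  have ey' : (y != c.+1 :> nat) by apply/eqP.
  apply/eqP; apply: contraTT e => ne; apply: md => //; lia.
Qed.

Lemma sig'_on i : on_line (A (sig' i)) (W i) /\ on_line (A (sig' i)) (W (ordS i)).
Proof.
rewrite /sig' /W /=; have hi := ltn_ord i.
case: eqP => ei; last have ei' : (i != c.+1 :> nat) by apply/eqP.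
  rewrite ei modnn Wf_c1 Wf_0; split; apply/on_lineE; [exact: q2_on|exact: q1_on].
rewrite modn_small; last lia.
have [i0|ipos] : (i:nat) = 0%N \/ (0 < (i:nat))%N by lia.
  rewrite i0 addn0 Wf_0 (Wf_mid (l := 1)) ?addn1; last lia.
  by split; [apply: cross_sig|case: (on_P j1)].
rewrite Wf_mid; last lia.
have [ic|ic] : (i:nat) = c \/ ((i:nat) < c)%N by lia.
  rewrite ic Wf_c1; split; [by case: (on_P (j1 + c))|exact: cross_sig].
rewrite Wf_mid ?addnS; last lia.
exact: on_P.
Qed.

Lemma GW : G_polygon A W.
Proof.
split; first exact: convW.
split; first exact: W_vertex.
exists sig'; split; [exact: sig'_inj|exact: sig'_on].
Qed.

Lemma PP_hull k : hull V (PP k). Proof. exact: hull_corner. Qed.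

Lemma W_hull i : hull V (W i).
Proof.
rewrite /W /Wf; case: eqP => _.
  apply: hull_lerp; try exact: PP_hull.
  by have := u1_01 => /andP [? ?]; apply/andP; split; lra.
case: eqP => _; last exact: PP_hull.
apply: hull_lerp; try exact: PP_hull.
by have := u2_01 => /andP [? ?]; apply/andP; split; lra.
Qed.

Lemma hullWV x : hull W x -> hull V x.
Proof.
case=> w [w0 [w1 ->]]; apply: hull_comb => //; exact: W_hull.
Qed.

Lemma Vside k : exists i : 'I_m, V i = PP k /\ V (ordS i) = PP k.+1.
Proof. by exists (idx hm k); rewrite /P ordS_idx. Qed.

Lemma sideV k x : open_seg (PP k) (PP k.+1) x -> exists i : 'I_m, open_seg (V i) (V (ordS i)) x.
Proof. by case: (Vside k) => i [e1 e2] h; exists i; rewrite e1 e2. Qed.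

Lemma cut_interior x : open_seg q2 q1 x -> interior (hull V) x.
Proof.
case=> t [/andP [t0 t1] ->].
have /andP [a0 a1] := u1_01; have /andP [b0 b1] := u2_01.
apply: (@interior_crit R m V (PP j1) (PP j1.+1) (PP (j1 + c)) (PP (j1 + c).+1)
   (t * (1 - uu j1)) (t * uu j1) ((1 - t) * (1 - uu (j1 + c))) ((1 - t) * uu (j1 + c))).
- exact: PP_hull.
- exact: PP_hull.
- exact: PP_hull.
- exact: PP_hull.
- by apply: mulr_gt0; lra.
- by apply: mulr_gt0; lra.
- by apply: mulr_gt0; lra.
- by apply: mulr_ge0; lra.
- by ring.
- have : 0 < DV j1 (PP (j1 + c)).
    apply: (DD_pos hm hconv); first by apply: md0; lia.
    by rewrite -addn1; apply: md; lia.
  rewrite /DD /sdet; apply: contraTneq => ->; by rewrite mulr0 ltxx.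
- by rewrite /q1 /q2 /cross /lerp /=; congr (_, _); ring.
Qed.

Definition Vset := fun x => is_vertex A x /\
    (interior (hull V) x \/ exists i, open_seg (V i) (V (ordS i)) x).
Definition Wset := fun x => is_vertex A x /\
    (interior (hull W) x \/ exists i, open_seg (W i) (W (ordS i)) x).

Lemma WV x : Wset x -> Vset x.
Proof.
case=> hv [hi|[i hi]]; split => //.
  by left; move: hi; apply: filterS; exact: hullWV.
move: hi; rewrite /W /=; have hi := ltn_ord i.
have [ei|ei] : (i:nat) = c.+1 \/ ((i:nat) <= c)%N by lia.
  by rewrite ei modnn Wf_c1 Wf_0 => h; left; apply: cut_interior.
rewrite modn_small; last lia.
move=> h; right; move: h.
have [i0|ipos] : (i:nat) = 0%N \/ (0 < (i:nat))%N by lia.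
  rewrite i0 Wf_0 (Wf_mid (l := 1)) ?addn1; last lia.
  move=> h; apply: (sideV (k := j1)); apply: open_sub1 h _; exact: u1_01.
rewrite Wf_mid; last lia.
have [ic|ic] : (i:nat) = c \/ ((i:nat) < c)%N by lia.
  rewrite ic Wf_c1 => h; apply: (sideV (k := j1 + c)); apply: open_sub2 h _; exact: u2_01.
rewrite Wf_mid ?addnS; last lia.
exact: sideV.
Qed.

Lemma q1_V : Vset q1.
Proof.
split; first exact/cross_vertex/Fs1.
right; apply: (sideV (k := j1)); exists (uu j1); split => //; exact: u1_01.
Qed.

Lemma q1_W : ~ Wset q1.
Proof.
case=> _; have := @corner_not R c.+2 W s _ _ (Ordinal (isT : (0 < c.+2)%N)).
rewrite /W /= Wf_0; apply.
- by lia.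
- by case: convW => _ [s' [_ h]]; move=> i j nji nji2; have := @convW_nat i j; rewrite /W /sdet; apply;
     [have := ltn_ord i; lia|have := ltn_ord j; lia| | ].
Qed.

End Cut.

Lemma chain (R : realType) (F : nat -> R) (m i0 : nat) :
  (0 < m)%N -> (i0 < m)%N -> (forall l, F l != 0) ->
  (forall l l', (l %% m = l' %% m)%N -> F l = F l') ->
  0 < F i0 -> 0 < F i0.+1 -> (exists l, F l < 0) ->
  exists j1 c ea, [/\ (1 < c < m)%N, F j1 < 0, F (j1 + c).+1 < 0,
    (forall l, (0 < l <= c)%N -> 0 < F (j1 + l)) &
    [/\ (0 < ea < c)%N, ((j1 + ea) %% m = i0 %% m)%N & ((j1 + ea.+1) %% m = i0.+1 %% m)%N]].
Proof.
move=> m0 i0m Fnz Fmod F0 F1 [l hl].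
have Fpos : forall l, ~~ (F l < 0) -> 0 < F l.
  by move=> x h; rewrite lt_neqAle eq_sym Fnz /= leNgt.
set l' := (l %% m)%N.
have hl' : F l' < 0 by rewrite (Fmod l' l) // /l' modn_mod.
have l'm : (l' < m)%N by rewrite /l' ltn_pmod.
move: l' hl' l'm => l' hl' l'm.
have exa : exists t, (0 < t)%N && (F (i0 + m - t)%N < 0).
  exists (i0 + m - l')%N; have -> : (i0 + m - (i0 + m - l') = l')%N by lia.
  by rewrite hl' andbT; lia.
case: (ex_minnP exa) => ea /andP [ea0 eaF] eamin.
have eaB : (ea <= i0 + m)%N.
  have := eamin (i0 + m - l')%N.
  rewrite (_ : i0 + m - (i0 + m - l') = l')%N ?hl' ?andbT; last by lia.
  move=> H; have h0 : (0 < i0 + m - l')%N by lia.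
  have := H h0; lia.
have exb : exists t, (0 < t)%N && (F (i0.+1 + t)%N < 0).
  exists (l' + 2 * m - i0.+1)%N.
  have -> : (i0.+1 + (l' + 2 * m - i0.+1) = 2 * m + l')%N by lia.
  rewrite (Fmod _ l'); last by rewrite modnMDl.
  by rewrite hl' andbT; lia.
case: (ex_minnP exb) => eb /andP [eb0 ebF] ebmin.
move: eamin ebmin => eamin ebmin.
exists (i0 + m - ea)%N, (ea + eb)%N, ea.
have hF : forall t, (0 < t <= ea + eb)%N -> 0 < F (i0 + m - ea + t)%N.
  move=> t /andP [t0 tc]; apply: Fpos; apply/negP => hneg.
  have [tl|[te|[te|tg]]] : (t < ea \/ t = ea \/ t = ea.+1 \/ ea.+1 < t)%N by lia.
  - have := eamin (ea - t)%N.
    rewrite (_ : i0 + m - (ea - t) = i0 + m - ea + t)%N; last by lia.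
    rewrite hneg andbT => H; have h0 : (0 < ea - t)%N by lia.
    have := H h0; lia.
  - move: hneg; rewrite te (_ : i0 + m - ea + ea = i0 + m)%N; last by lia.
    by rewrite (Fmod _ i0) ?modnDr // ltNge ltW.
  - move: hneg; rewrite te (_ : i0 + m - ea + ea.+1 = i0.+1 + m)%N; last by lia.
    by rewrite (Fmod _ i0.+1) ?modnDr // ltNge ltW.
  - have := ebmin (t - ea.+1)%N.
    rewrite (Fmod (i0.+1 + (t - ea.+1))%N (i0 + m - ea + t)%N); last first.
      by rewrite (_ : i0 + m - ea + t = i0.+1 + (t - ea.+1) + m)%N ?modnDr //; lia.
    rewrite hneg andbT => H; have h0 : (0 < t - ea.+1)%N by lia.
    have := H h0; lia.
have hc2 : (ea + eb < m)%N.
  rewrite ltnNge; apply/negP => cm.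
  have h0 : (0 < m <= ea + eb)%N by rewrite m0.
  have := hF m h0; rewrite (Fmod _ (i0 + m - ea)%N); last by rewrite modnDr.
  by rewrite ltNge ltW.
split => //.
- by rewrite hc2 andbT; lia.
- rewrite (_ : (i0 + m - ea + (ea + eb)).+1 = (i0.+1 + eb) + m)%N; last by lia.
  by rewrite (Fmod _ (i0.+1 + eb)%N) ?modnDr.
split.
- by rewrite ea0; lia.
- by rewrite (_ : i0 + m - ea + ea = i0 + m)%N ?modnDr //; lia.
- by rewrite (_ : i0 + m - ea + ea.+1 = i0.+1 + m)%N ?modnDr //; lia.
Qed.

Lemma chain_facts c ea m : (1 < c < m)%N -> (0 < ea < c)%N ->
  [/\ (c.+2 <= m.+1)%N, (ea < c.+2)%N, (0 < ea <= c)%N, (0 < ea.+1 <= c)%N & (ea.+1 < c.+2)%N].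
Proof. move=> h1 h2; split; lia. Qed.

Lemma affL_aff3 (R : realType) (L : line R) y : affL L y = aff3 (la L) (lb L) (- lc L) y.
Proof. by rewrite /affL /aff3; ring. Qed.

Lemma affL_aff3N (R : realType) (L : line R) y : - affL L y = aff3 (- la L) (- lb L) (lc L) y.
Proof. by rewrite /affL /aff3; ring. Qed.

Section Main.
Variables (R : realType) (n : nat) (A : 'I_n -> line R) (m : nat) (V : 'I_m -> R * R)
  (s : R) (sigma : 'I_m -> 'I_n).
Hypothesis hgp : bounded_general_position A.
Hypothesis hm : (2 < m)%N.
Hypothesis hconv : forall i j : 'I_m, j != i -> j != ordS i ->
      0 < s * det2 (sub2 (V (ordS i)) (V i)) (sub2 (V j) (V i)).
Hypothesis hvert : forall i, is_vertex A (V i).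
Hypothesis hsinj : injective sigma.
Hypothesis hson : forall i, on_line (A (sigma i)) (V i) /\ on_line (A (sigma i)) (V (ordS i)).

Lemma DD_side (k : 'I_m) x : on_line (A (sigma k)) x -> DD V s hm k x = 0.
Proof.
move=> hx; rewrite /DD /sdet P_val P_ordS.
case: hgp => hnz _; case: (hson k) => h1 h2.
by rewrite (collinear_det (hnz (sigma k)) h1 h2 hx) mulr0.
Qed.

Lemma choose_L x : Vset A V x ->
  exists L : 'I_n, on_line (A L) x /\ forall k, L != sigma k.
Proof.
case=> [[i1 [i2 [ne [h1 h2]]]] [hint|[i [t [/andP [t0 t1] ex]]]]].
  exists i1; split => // k; apply/eqP => e.
  have := DD_int hm hconv k hint; rewrite DD_side ?ltxx //; by rewrite -e.
have hxs : on_line (A (sigma i)) x by rewrite ex; case: (hson i) => ? ?; apply: on_line_lerp.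
pose L := if i1 != sigma i then i1 else i2.
have hLi : L != sigma i.
  rewrite /L; case: ifP => // /negbFE /eqP e; by rewrite -e eq_sym.
exists L; split; first by rewrite /L; case: ifP.
move=> k; case: (eqVneq k i) => [-> //|nki].
apply/eqP => e.
have := @DD_lerp_pos R m V s hm hconv k i t.
have hxk : on_line (A (sigma k)) x by rewrite -e; rewrite /L; case: ifP.
rewrite !P_val P_ordS -ex DD_side // ltxx.
move=> H; suff : false by []. apply: H; last by rewrite t0 t1.
rewrite !modn_small //; by rewrite eq_sym.
Qed.

Lemma corner_off (L : 'I_n) : (forall k, L != sigma k) -> forall k : 'I_m, affL (A L) (V k) != 0.
Proof.
move=> hL k; apply/eqP => hk0.
have hk : on_line (A L) (V k) by apply/on_lineE.
set k' := ord_pred k.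
have h1 := (hson k).1.
have h2 : on_line (A (sigma k')) (V k) by have := (hson k').2; rewrite /k' ord_predK.
have nk : sigma k != sigma k'.
  apply/eqP => /hsinj e.
  have : ordS k = k by rewrite {1}e ord_predK.
  move/(f_equal val) => /= e2.
  have H := @neq_mod m k 0 1; rewrite addn0 addn1 e2 (modn_small (ltn_ord k)) eqxx in H.
  have hh : (0 < 1 < 0 + m)%N by lia.
  by have := H hh.
case: hgp => _ [_ h3]; apply: (h3 L (sigma k) (sigma k') (V k)) => //.
Qed.

Lemma Vset_hull x : Vset A V x -> hull V x.
Proof.
case=> _ [hint|[i [t [/andP [t0 t1] ->]]]]; first exact: nbhs_singleton hint.
by apply: hull_lerp; try exact: hull_corner; rewrite ltW // ltW.
Qed.

Lemma signs L x : on_line (A L) x -> hull V x -> (forall k, affL (A L) (V k) != 0) ->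
  (exists k, affL (A L) (V k) < 0) /\ (exists k, 0 < affL (A L) (V k)).
Proof.
move=> /on_lineE hx hh hnz; split.
  case: (boolP [exists k : 'I_m, affL (A L) (V k) < 0]) => [/existsP //|/existsPn h].
  exfalso; have : 0 < affL (A L) x.
    rewrite affL_aff3; apply: hull_aff_gt0 hh => k; rewrite -affL_aff3.
    by rewrite lt_neqAle eq_sym hnz /= leNgt h.
  by rewrite hx ltxx.
case: (boolP [exists k : 'I_m, 0 < affL (A L) (V k)]) => [/existsP //|/existsPn h].
exfalso; have : 0 < - affL (A L) x.
  rewrite affL_aff3N; apply: hull_aff_gt0 hh => k; rewrite -affL_aff3N.
  by rewrite oppr_gt0 lt_neqAle hnz /= leNgt h.
by rewrite hx oppr0 ltxx.
Qed.

Lemma main_core (k : nat) (a b : R * R) (i0 : 'I_m) :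
  card_is (Vset A V) k -> (0 < k)%N -> (forall x, is_vertex A x -> ~ open_seg a b x) ->
  ((V i0 = a /\ V (ordS i0) = b) \/ (V i0 = b /\ V (ordS i0) = a)) -> (s = 1 \/ s = -1) ->
  exists (m' : nat) (W : 'I_m' -> R * R) (r : nat),
    (m' <= m.+1)%N /\ G_polygon A W /\ is_side W a b /\
    vertex_number A W r /\ (r < k)%N.
Proof.
move=> hcard hk hne hside hs.
have [x Vx] : exists x, Vset A V x.
  case: (hcard) => [[|x sl] [_ [hmem hsz]]]; first by move: hk; rewrite -hsz.
  by exists x; apply/hmem; rewrite mem_head.
have [L [hxL hL]] := choose_L Vx.
have hnz := corner_off hL.
have [[kn hkn] [kp hkp]] := signs hxL (Vset_hull Vx) hnz.
pose ep : R := if 0 < affL (A L) (V i0) then 1 else -1.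
have hep : ep != 0 by rewrite /ep; case: ifP => _; rewrite ?oppr_eq0 oner_eq0.
have Fnz : forall l, F A V L ep hm l != 0.
  by move=> l; rewrite /F mulf_neq0 // /P.
have Fpos : forall l, ~~ (F A V L ep hm l < 0) -> 0 < F A V L ep hm l.
  by move=> l h; rewrite lt_neqAle eq_sym Fnz /= leNgt.
have Fmod : forall l l', (l %% m = l' %% m)%N -> F A V L ep hm l = F A V L ep hm l'.
  by move=> l l' e; rewrite /F (P_mod V hm e).
have F0 : 0 < F A V L ep hm i0.
  rewrite /F P_val /ep; case: ifP => h; first by rewrite mul1r.
  rewrite mulN1r oppr_gt0 lt_neqAle hnz /= leNgt h //.
have [l hl] : exists l : nat, F A V L ep hm l < 0.
  rewrite /F /ep; case: ifP => h.
    by exists kn; rewrite P_val mul1r.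
  by exists kp; rewrite P_val mulN1r oppr_lt0.
have F1 : 0 < F A V L ep hm i0.+1.
  apply: Fpos; apply/negP => hneg.
  have hprod : F A V L ep hm i0 * F A V L ep hm i0.+1 < 0 by rewrite pmulr_rlt0.
  have hv := cross_vertex hson hL hep hprod.
  have /andP [u0 u1] := uu01 hprod.
  have ho : open_seg (V i0) (V (ordS i0)) (cross A V L ep hm i0).
    by exists (uu A V L ep hm i0); split; [rewrite u0 u1|rewrite /cross P_val P_ordS].
  case: hside => [[e1 e2]|[e1 e2]]; move: ho; rewrite e1 e2.
    by apply: hne.
  by move/open_seg_sym; apply: hne.
have [j1 [c [ea [/andP [hc1 hc2] hF1 hF2 hF [hea e1 e2]]]]] :=
  chain (m0 hm) (ltn_ord i0) Fnz Fmod F0 F1 (ex_intro _ l hl).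
have [hcm eac eap eap1 eac1] := chain_facts (introT andP (conj hc1 hc2)) hea.
have GWp := GW hconv hvert hsinj hson hL hep hs hc1 hc2 hF1 hF2 hF.
have [r rk hr] := card_sub hcard (WV hconv hep hc1 hc2 hF1 hF2 hF)
   (q1_V hson hL hep hc1 hF1 hF) (q1_W hconv hep hs hc1 hc2 hF1 hF2 hF).
exists c.+2, (W A V L ep j1 hm), r.
split; first exact: hcm.
split; first exact: GWp.
split; last by split.
exists (Ordinal eac).
have Wa : W A V L ep j1 hm (Ordinal eac) = V i0.
  rewrite /W /= (Wf_mid A V L ep j1 hm eap).
  by rewrite -P_val; apply: P_mod; rewrite e1.
have Wb : W A V L ep j1 hm (ordS (Ordinal eac)) = V (ordS i0).
  rewrite /W /= (modn_small eac1) (Wf_mid A V L ep j1 hm eap1).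
  by rewrite -P_ordS; apply: P_mod; rewrite e2.
rewrite Wa Wb.
by case: hside => [[-> ->]|[-> ->]]; [left|right].
Qed.

End Main.


Theorem lemma1p8 (R : realType) (n : nat) (A : 'I_n -> line R)
  (m : nat) (V : 'I_m -> R * R) (k : nat) (a b : R * R) :
  bounded_general_position A ->
  G_polygon A V ->
  ~ is_alcove A (hull V) ->
  vertex_number A V k -> (0 < k)%N ->
  is_edge A a b -> is_side V a b ->
  exists (m' : nat) (W : 'I_m' -> R * R) (r : nat),
    (m' <= m.+1)%N /\ G_polygon A W /\ is_side W a b /\
    vertex_number A W r /\ (r < k)%N.
Proof.
move=> hgp [[hm [s [hs hconv]]] [hvert [sigma [hsinj hson]]]] _ hvn hk [ie hedge] [i0 hside].
case: hedge => _ [_ [_ [_ [_ hne]]]].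
exact: (main_core hgp hm hconv hvert hsinj hson hvn hk hne hside hs).
Qed.
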